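(* For every connected graph $G$, $2\,\mathrm{GP}(G)$ is an integer; that is, $\mathrm{GP}(G)$ is either an integer or half of an (odd) integer.
   Context: All graphs are simple and finite. For a connected graph $G$, $d_G(u,v)$ denotes the shortest-path distance and $\mathrm{Aut}(G)$ the automorphism group. The Graovac-Pisanski index is $$\mathrm{GP}(G)=\frac{|V(G)|}{2|\mathrm{Aut}(G)|}\sum_{u\in V(G)}\sum_{\alpha\in \mathrm{Aut}(G)} d_G(u,\alpha(u)).$$ *)

(* Defs.v *)
From HB Require Import structures.
From mathcomp Require Import all_boot all_order all_algebra all_fingroup.
Set Implicit Arguments. Unset Strict Implicit. Unset Printing Implicit Defensive.
Import GRing.Theory Num.Theory.

Definition simple_graph (T : finType) (e : rel T) : Prop :=
  symmetric e /\ irreflexive e.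

Definition connected_graph (T : finType) (e : rel T) : Prop :=
  forall x y : T, connect e x y.

Definition walk_of_length (T : finType) (e : rel T) (n : nat) (x y : T) : bool :=
  [exists p : n.-tuple T, path e x p && (last x p == y)].

(* Shortest-path distance: the least n such that a walk of length n from x
   to y exists (searched among 0..#|T|-1, which suffices in a connected
   graph). *)
Definition dist (T : finType) (e : rel T) (x y : T) : nat :=
  find (fun n => walk_of_length e n x y) (iota 0 #|T|).

Definition Aut (T : finType) (e : rel T) : {set {perm T}} :=
  [set s : {perm T} | [forall x, forall y, e (s x) (s y) == e x y]].

Definition GP (T : finType) (e : rel T) : rat :=
  ((#|T|%:R / (2 * #|Aut e|%:R)) *
   (\sum_(u : T) \sum_(a in Aut e) (dist e u (a u))%:R))%R.

(* Main.v *)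
Require Import Defs.
From mathcomp Require Import all_boot all_order all_algebra all_fingroup.
Set Implicit Arguments. Unset Strict Implicit. Unset Printing Implicit Defensive.

Section S.
Variables (T : finType) (e : rel T).

Lemma Aut_gs : group_set (Defs.Aut e).
Proof.
apply/group_setP; split.
  by rewrite inE; apply/forallP=> x; apply/forallP=> y; rewrite !perm1.
move=> a b; rewrite !inE => /forallP Ha /forallP Hb.
apply/forallP=> x; apply/forallP=> y; rewrite !permM.
by rewrite (eqP (forallP (Hb (a x)) (a y))) (eqP (forallP (Ha x) y)).
Qed.

Canonical AutG : {group {perm T}} := Group Aut_gs.

Lemma AutE a x y : a \in Defs.Aut e -> e (a x) (a y) = e x y.
Proof. by rewrite inE => /forallP H; apply/eqP/(forallP (H x)). Qed.

Lemma walk_aut a n x y : a \in Defs.Aut e ->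
  walk_of_length e n x y -> walk_of_length e n (a x) (a y).
Proof.
move=> Ha /existsP[p /andP[Hp Hl]]; apply/existsP; exists (map_tuple a p).
apply/andP; split.
  clear Hl; move: Hp; case: p => [s _] /=.
  elim: s x => //= z s IH x /andP[Hxz Hs].
  by rewrite AutE // Hxz (IH _ Hs).
by rewrite /= last_map (eqP Hl).
Qed.

Lemma dist_aut a x y : a \in Defs.Aut e -> dist e (a x) (a y) = dist e x y.
Proof.
move=> Ha; rewrite /dist; apply: eq_find => n; apply/idP/idP; last exact: walk_aut.
have Hb : (a^-1)%g \in Defs.Aut e by rewrite -[Defs.Aut e]/(gval AutG) groupV.
by move/(walk_aut Hb); rewrite !permK.
Qed.

Local Open Scope group_scope.
Local Notation G := AutG.
Definition W u := (\sum_(a in G) dist e u ((a : {perm T}) u))%N.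

Lemma W_stab u : W u = (#|'C_G[u | 'P]| * \sum_(v in orbit 'P G u) dist e u v)%N.
Proof.
rewrite /W (partition_big_imset (fun a : {perm T} => a u)) /=.
have -> : [set (a : {perm T}) u | a in G] = orbit 'P G u.
  by rewrite orbitE; apply: eq_imset => a.
rewrite big_distrr /=; apply: eq_bigr => v /orbitP[b Gb <-].
rewrite (eq_bigr (fun _ => dist e u ('P%act u b))); last first.
  by move=> a /andP[_ /eqP ->].
rewrite big_const iter_addn_0 mulnC; congr muln.
transitivity #|amove 'P G u ('P%act u b)|.
  by apply: eq_card => a; rewrite inE.
rewrite amove_act ?subsetT //; exact: card_rcoset.
Qed.

Lemma W_inv b u : b \in G -> W (b u) = W u.
Proof.
move=> Gb; rewrite /W.
have Gb' : b^-1 \in G by rewrite groupV.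
transitivity (\sum_(a in G) dist e u (((a ^ b^-1)%g : {perm T}) u))%N.
  apply: eq_bigr => a _.
  by rewrite -(dist_aut _ _ Gb') permK conjgE invgK !permM.
rewrite -(big_imset (fun c : {perm T} => dist e u (c u)) (in2W (conjg_inj b^-1))) /=.
have H : [set x ^ b^-1 | x in Defs.Aut e] = Defs.Aut e := conjGid Gb'.
by rewrite H.
Qed.

Lemma S_dvd : (#|G| %| \sum_u W u)%N.
Proof.
have -> : (\sum_u W u = \sum_(u in [set: T]) W u)%N.
  by apply: eq_bigl => u; rewrite inE.
rewrite (partition_big_imset (orbit 'P G)) /=.
apply: dvdn_sum => O /imsetP[u0 _ ->].
rewrite (eq_bigr (fun _ => W u0)); last first.
  move=> u /andP[_ /eqP Hu].
  have /orbitP[b Gb <-] : u \in orbit 'P G u0 by apply/orbit_eqP.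
  exact: W_inv.
rewrite big_const iter_addn_0.
have -> : #|[pred u in [set: T] | orbit 'P G u == orbit 'P G u0]| = #|orbit 'P G u0|.
  apply: eq_card => u; rewrite !inE /=.
  by apply/eqP/idP => [<-|H]; [exact: orbit_refl | apply/orbit_eqP].
by rewrite mulnC W_stab mulnA card_orbit_stab dvdn_mulr.
Qed.
End S.

From mathcomp Require Import ring.
Import GRing.Theory Num.Theory.

Theorem corollary3p3 (T : finType) (e : rel T) :
  simple_graph e -> connected_graph e ->
  exists z : int, (2 * GP e)%R = (z%:~R : rat).
Proof.
move=> _ _.
have [k Hk] := dvdnP (S_dvd e).
exists (Posz (#|T| * k)%N).
have g0 : (0 < #|AutG e|)%N := cardG_gt0 _.
have Hs : (\sum_(u : T) \sum_(a in Defs.Aut e) (dist e u (a u))%:R = ((k * #|AutG e|)%N)%:R :> rat)%R.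
  rewrite -Hk natr_sum; apply: eq_bigr => u _; rewrite natr_sum //.
rewrite /GP Hs.
have -> : ((Posz (#|T| * k)%N)%:~R = ((#|T| * k)%N)%:R :> rat)%R by [].
have gne : (#|Defs.Aut e|%:R != 0 :> rat)%R by rewrite pnatr_eq0 -lt0n.
rewrite !natrM.
have -> : #|AutG e| = #|Defs.Aut e| by [].
field.
by rewrite gne.
Qed.
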